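(* Let $n\in\mathbb{N}_0$, let $f\in C^{2n}(\mathbb{R}^d,\mathbb{R})$, $\underline a\in C^{2n}(\mathbb{R}^d,\mathbb{R}^d)$, $b\in C^{2n+1}(\mathbb{R}^d,\mathbb{R}^{d\times m})$, and let $L^0=\sum_{k=1}^d\tilde a^k\frac{\partial}{\partial x^k}+\frac12\sum_{k,l=1}^d\sum_{j=1}^m b^{k,j}b^{l,j}\frac{\partial^2}{\partial x^k\partial x^l}$ with $\tilde a^i=\underline a^i+\frac12\sum_{k=1}^d\sum_{l=1}^m b^{k,l}\frac{\partial b^{i,l}}{\partial x^k}$. Then for every $x_0\in\mathbb{R}^d$ $$(L^0)^n f(x_0)=\sum_{\substack{t\in LTS(S)\\ \rho(t)=n}}\ \sum_{j_1,\dots,j_{s(t)/2}=1}^m\frac{F(t)(x_0)}{2^{s(t)/2}},$$ where the elementary differentials $F(t)$ are formed with the drift $\underline a$ (not $\tilde a$) at deterministic nodes.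
   Context: Fix $d,m\ge1$, $f:\mathbb{R}^d\to\mathbb{R}$, $\underline a:\mathbb{R}^d\to\mathbb{R}^d$, $b:\mathbb{R}^d\to\mathbb{R}^{d\times m}$ with columns $b^j$ and entries $b^{k,j}$. A monotonically labelled coloured tree with $l$ nodes consists of nodes $1,\dots,l$, a father map $t':\{2,\dots,l\}\to\{1,\dots,l-1\}$ with $t'(i)<i$ (node 1 is the root), and a colour per node: $\gamma$ (root), $\tau$ (deterministic) or $\sigma_j$ (stochastic, index $j$). $LTS(S)$ is the set of trees obtainable thus: start with the single node $1$ coloured $\gamma$; at each step, if the current tree has $\lambda$ nodes and $k-1$ pairs of stochastic nodes have been added so far, either (a) add node $\lambda+1$ coloured $\tau$ with father any node in $\{1,\dots,\lambda\}$, or (b) add nodes $\lambda+1,\lambda+2$, both coloured $\sigma_{j_k}$ ($j_k$ a formal index variable), with $t'(\lambda+1)\in\{1,\dots,\lambda\}$ and $t'(\lambda+2)\in\{1,\dots,\lambda+1\}$ (node $\lambda+1$ may be the father of node $\lambda+2$). $d(t)$ = number of $\tau$-nodes, $s(t)$ = number of stochastic nodes (even; index variables $j_1,\dots,j_{s/2}$), $\rho(t)=d(t)+s(t)/2$. The index variables range over $\{1,\dots,m\}$ in the sums. Elementary differential: $g^{(k)}(x)(v_1,\dots,v_k)$ has $I$-th component $\sum_{J_1,\dots,J_k}\frac{\partial^k g^I(x)}{\partial x^{J_1}\cdots\partial x^{J_k}}v_1^{J_1}\cdots v_k^{J_k}$; for a tree with index values fixed, recursively for node $i$ with children $c_1,\dots,c_k$: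 $F_i(x)=g_i^{(k)}(x)(F_{c_1}(x),\dots,F_{c_k}(x))$, with $g_i=f$ for $\gamma$, $\underline a$ for $\tau$, $b^j$ for $\sigma_j$; $F(t):=F_1$. *)

(* Defs.v *)
From mathcomp Require Import ssreflect ssrfun ssrbool eqtype ssrnat seq fintype bigop.
From Stdlib Require Import Reals ClassicalEpsilon.
From Stdlib Require List.

Set Implicit Arguments.
Unset Strict Implicit.
Unset Printing Implicit Defensive.

Definition pt (d : nat) := 'I_d -> R.

Section Analysis.
Variable d : nat.

Definition upd (x : pt d) (k : 'I_d) (t : R) : pt d :=
  fun i => if i == k then t else x i.

(* partial derivative d g / d x^k (total function: the derivative when it
   exists; unspecified otherwise) *)
Definition partial (k : 'I_d) (g : pt d -> R) : pt d -> R :=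
  fun x => epsilon (inhabits 0%R)
    (fun l => derivable_pt_lim (fun t => g (upd x k t)) (x k) l).

Definition dpart (ks : seq 'I_d) (g : pt d -> R) : pt d -> R :=
  foldr partial g ks.

Definition contRd (g : pt d -> R) : Prop :=
  forall x eps, (0 < eps)%R -> exists delta, (0 < delta)%R /\
    forall y : pt d, (forall i, (Rabs (y i - x i) < delta)%R) ->
      (Rabs (g y - g x) < eps)%R.

Definition Ck (k : nat) (g : pt d -> R) : Prop :=
  forall ks : seq 'I_d, (size ks <= k)%N ->
    contRd (dpart ks g) /\
    ((size ks < k)%N -> forall (i : 'I_d) (x : pt d),
        exists l, derivable_pt_lim (fun t => dpart ks g (upd x i t)) (x i) l).

Definition sumI (F : 'I_d -> R) : R := \big[Rplus/0%R]_(i < d) F i.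

(* g^{(k)}(x)(v_1,...,v_k) for a scalar component g:
   sum_{J_1..J_k} d^k g/dx^{J_1}..dx^{J_k} v_1^{J_1} ... v_k^{J_k} *)
Fixpoint deriv_apply (g : pt d -> R) (vs : seq (pt d -> 'I_d -> R)) : pt d -> R :=
  match vs with
  | [::] => g
  | v :: vs' => fun x => sumI (fun J => (deriv_apply (partial J g) vs' x * v x J)%R)
  end.

End Analysis.

(* colour of a non-root node: tau, or sigma_{j_k} where k is the (0-based)
   number of the index variable j_{k+1} *)
Inductive colour := Tau | Sig of nat.

(* A tree with l nodes, nodes labelled 0..l-1 (0 = root, coloured gamma).
   The list has l-1 entries; entry number (i-1) gives (father, colour) of node i. *)
Definition tree := seq (nat * colour).

Definition nnodes (t : tree) : nat := (size t).+1.

Definition is_tau (c : colour) : bool := if c is Tau then true else false.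
Definition is_sig (c : colour) : bool := if c is Sig _ then true else false.

Definition dnum (t : tree) : nat := count (fun e => is_tau e.2) t.
Definition snum (t : tree) : nat := count (fun e => is_sig e.2) t.
Definition rho (t : tree) : nat := dnum t + (snum t)./2.

(* LTS(S): trees obtainable by the growth process (0-based labels). *)
Inductive LTS : tree -> Prop :=
  | LTS_root : LTS [::]
  | LTS_det (t : tree) (p : nat) :
      LTS t -> (p < nnodes t)%N -> LTS (t ++ [:: (p, Tau)])
  | LTS_sto (t : tree) (p q : nat) :
      LTS t -> (p < nnodes t)%N -> (q < (nnodes t).+1)%N ->
      LTS (t ++ [:: (p, Sig (snum t)./2); (q, Sig (snum t)./2)]).

Definition father (t : tree) (i : nat) : nat := (nth (0, Tau) t i.-1).1.
Definition colour_of (t : tree) (i : nat) : colour := (nth (0, Tau) t i.-1).2.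

Definition children (t : tree) (i : nat) : seq nat :=
  filter (fun j => father t j == i) (iota 1 (size t)).

Section Elementary.
Variables (d m : nat).
Variable f : pt d -> R.
Variable a : 'I_d -> pt d -> R.
Variable b : 'I_d -> 'I_m -> pt d -> R.

Definition gcol (J : seq 'I_m) (c : colour) (I : 'I_d) : pt d -> R :=
  match c with
  | Tau => a I
  | Sig k => match List.nth_error J k with
             | Some j => b I j
             | None => fun _ => 0%R
             end
  end.

(* F_i for non-root node i (vector valued, given componentwise);
   fuel bounds the depth of recursion (labels strictly increase downwards). *)
Fixpoint Fnode (t : tree) (J : seq 'I_m) (fuel : nat) (i : nat) : pt d -> 'I_d -> R :=
  match fuel with
  | 0 => fun _ _ => 0%R
  | fuel'.+1 => fun x I =>
      deriv_apply (gcol J (colour_of t i) I) (map (Fnode t J fuel') (children t i)) x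
  end.

(* elementary differential F(t) = F_1 (the root, coloured gamma, uses f) *)
Definition Fel (t : tree) (J : seq 'I_m) : pt d -> R :=
  deriv_apply f (map (Fnode t J (nnodes t)) (children t 0)).

Fixpoint sumJ (r : nat) (G : seq 'I_m -> R) : R :=
  match r with
  | 0 => G [::]
  | r'.+1 => \big[Rplus/0%R]_(j < m) sumJ r' (fun J => G (j :: J))
  end.

Definition atil (i : 'I_d) : pt d -> R :=
  fun x => (a i x + / 2 * sumI (fun k => \big[Rplus/0%R]_(l < m)
                                  (b k l x * partial k (b i l) x)))%R.

Definition L0 (g : pt d -> R) : pt d -> R :=
  fun x => (sumI (fun k => atil k x * partial k g x)
            + / 2 * sumI (fun k => sumI (fun l => \big[Rplus/0%R]_(j < m)
                  (b k j x * b l j x * partial k (partial l g) x))))%R.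

End Elementary.

(* Main.v *)
Require Import Defs.
From HB Require Import structures.
From mathcomp Require Import ssreflect ssrfun ssrbool eqtype ssrnat seq fintype bigop.
From Stdlib Require Import Reals ClassicalEpsilon FunctionalExtensionality Lia.
From mathcomp Require Import zify.
From Stdlib Require List.

Set Implicit Arguments.
Unset Strict Implicit.
Unset Printing Implicit Defensive.

Lemma Rplus_assoc' : associative Rplus. Proof. by move=> x y z; rewrite Rplus_assoc. Qed.
HB.instance Definition _ := Monoid.isComLaw.Build R 0%R Rplus Rplus_assoc' Rplus_comm Rplus_0_l.
HB.instance Definition _ := Monoid.isMulLaw.Build R 0%R Rmult Rmult_0_l Rmult_0_r.
HB.instance Definition _ := Monoid.isAddLaw.Build R Rmult Rplus Rmult_plus_distr_r Rmult_plus_distr_l.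

Section Smooth.
Variable d : nat.
Local Open Scope R_scope.
Implicit Types (g h : pt d -> R) (x : pt d) (i : 'I_d).

Definition ex_deriv g i x := exists l, derivable_pt_lim (fun t => g (upd x i t)) (x i) l.

Lemma upd_same x i : upd x i (x i) = x.
Proof. apply: functional_extensionality => j; rewrite /upd; by case: eqP => [->|]. Qed.

Lemma partial_spec g i x : ex_deriv g i x ->
  derivable_pt_lim (fun t => g (upd x i t)) (x i) (partial i g x).
Proof. move=> H; rewrite /partial; exact: (epsilon_spec (inhabits 0) _ H). Qed.

Lemma partial_eq g i x l : derivable_pt_lim (fun t => g (upd x i t)) (x i) l -> partial i g x = l.
Proof.
move=> H; apply: (uniqueness_limite _ _ _ _ (partial_spec _) H); by exists l.
Qed.

Lemma dl_plus g h i x : ex_deriv g i x -> ex_deriv h i x ->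
  derivable_pt_lim (fun t => g (upd x i t) + h (upd x i t)) (x i) (partial i g x + partial i h x).
Proof. move=> Hg Hh; exact: (derivable_pt_lim_plus _ _ _ _ _ (partial_spec Hg) (partial_spec Hh)). Qed.

Lemma dl_mult g h i x : ex_deriv g i x -> ex_deriv h i x ->
  derivable_pt_lim (fun t => g (upd x i t) * h (upd x i t)) (x i)
     (partial i g x * h x + g x * partial i h x).
Proof.
move=> Hg Hh; have := derivable_pt_lim_mult _ _ _ _ _ (partial_spec Hg) (partial_spec Hh).
by cbv beta; rewrite upd_same.
Qed.

Lemma dl_sum (T : Type) (s : seq T) (P : pred T) (F : T -> pt d -> R) i x :
  (forall k, P k -> ex_deriv (F k) i x) ->
  derivable_pt_lim (fun t => \big[Rplus/0]_(k <- s | P k) F k (upd x i t)) (x i)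
     (\big[Rplus/0]_(k <- s | P k) partial i (F k) x).
Proof.
elim: s => [|a s IH] H.
  rewrite big_nil.
  have -> : (fun t => \big[Rplus/0]_(k <- [::] | P k) F k (upd x i t)) = fun _ => 0.
    by apply: functional_extensionality => t; rewrite big_nil.
  exact: derivable_pt_lim_const.
rewrite big_cons.
have -> : (fun t => \big[Rplus/0]_(k <- a :: s | P k) F k (upd x i t)) =
   fun t => (if P a then F a (upd x i t) + \big[Rplus/0]_(k <- s | P k) F k (upd x i t)
             else \big[Rplus/0]_(k <- s | P k) F k (upd x i t)).
  by apply: functional_extensionality => t; rewrite big_cons.
case Pa: (P a); last exact: IH.
exact: (derivable_pt_lim_plus _ _ _ _ _ (partial_spec (H _ Pa)) (IH H)).
Qed.

Fixpoint Sm (k : nat) (g : pt d -> R) : Prop :=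
  match k with
  | 0%N => True
  | k'.+1 => (forall i x, ex_deriv g i x) /\ forall i, Sm k' (partial i g)
  end.

Lemma Sm_S (k : nat) g : Sm k.+1 g -> Sm k g.
Proof.
elim: k g => [//|k IH] g [H1 H2]; split => // i; exact: IH.
Qed.

Lemma Sm_le (k k' : nat) g : (k <= k')%nat -> Sm k' g -> Sm k g.
Proof.
move=> /subnK <-; elim: (k' - k)%nat => [//|n IH] H.
by apply: IH; apply: Sm_S; rewrite -addSn.
Qed.

Lemma Sm_ex (k : nat) g i x : Sm k.+1 g -> ex_deriv g i x.
Proof. by case=> H _; exact: H. Qed.

Lemma Sm_part (k : nat) g i : Sm k.+1 g -> Sm k (partial i g).
Proof. by case=> _ H; exact: H. Qed.

Lemma partial_plus_fun g h i : (forall x, ex_deriv g i x) -> (forall x, ex_deriv h i x) ->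
  partial i (fun y => g y + h y) = fun x => partial i g x + partial i h x.
Proof. move=> Hg Hh; apply: functional_extensionality => x; apply: partial_eq; exact: dl_plus. Qed.

Lemma partial_mult_fun g h i : (forall x, ex_deriv g i x) -> (forall x, ex_deriv h i x) ->
  partial i (fun y => g y * h y) = fun x => partial i g x * h x + g x * partial i h x.
Proof. move=> Hg Hh; apply: functional_extensionality => x; apply: partial_eq; exact: dl_mult. Qed.

Lemma partial_sum_fun (T : Type) (s : seq T) (P : pred T) (F : T -> pt d -> R) i :
  (forall k x, P k -> ex_deriv (F k) i x) ->
  partial i (fun y => \big[Rplus/0]_(k <- s | P k) F k y) =
  fun x => \big[Rplus/0]_(k <- s | P k) partial i (F k) x.
Proof.
move=> H; apply: functional_extensionality => x; apply: partial_eq; apply: dl_sum => k Pk; exact: H.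
Qed.

Lemma partial_const (c : R) i : partial i (fun _ : pt d => c) = fun _ => 0.
Proof.
apply: functional_extensionality => x; apply: partial_eq; exact: derivable_pt_lim_const.
Qed.

Lemma Sm_const (k : nat) (c : R) : Sm k (fun _ => c).
Proof.
elim: k c => [//|k IH] c; split.
  move=> i x; exists 0; exact: derivable_pt_lim_const.
by move=> i; rewrite partial_const.
Qed.

Lemma Sm_plus (k : nat) g h : Sm k g -> Sm k h -> Sm k (fun y => g y + h y).
Proof.
elim: k g h => [//|k IH] g h [Hg1 Hg2] [Hh1 Hh2]; split.
  move=> i x; eexists; exact: dl_plus.
move=> i; rewrite partial_plus_fun; [apply: IH; [exact: Hg2 | exact: Hh2] | exact: (Hg1 i) | exact: (Hh1 i)].
Qed.

Lemma Sm_mult (k : nat) g h : Sm k g -> Sm k h -> Sm k (fun y => g y * h y).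
Proof.
elim: k g h => [//|k IH] g h Hg Hh; move: (Hg) (Hh) => [Hg1 Hg2] [Hh1 Hh2]; split.
  move=> i x; eexists; exact: dl_mult.
move=> i; rewrite partial_mult_fun; [|exact: (Hg1 i) | exact: (Hh1 i)].
apply: Sm_plus; apply: IH; [exact: Hg2 | exact: Sm_S | exact: Sm_S | exact: Hh2].
Qed.

Lemma Sm_sum (k : nat) (T : Type) (s : seq T) (P : pred T) (F : T -> pt d -> R) :
  (forall j, P j -> Sm k (F j)) -> Sm k (fun y => \big[Rplus/0]_(j <- s | P j) F j y).
Proof.
move=> H; elim: s => [|a s IH].
  have -> : (fun y => \big[Rplus/0]_(j <- [::] | P j) F j y) = fun _ => 0.
    by apply: functional_extensionality => y; rewrite big_nil.
  exact: Sm_const.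
have -> : (fun y => \big[Rplus/0]_(j <- a :: s | P j) F j y) =
   fun y => (if P a then F a y + \big[Rplus/0]_(j <- s | P j) F j y
             else \big[Rplus/0]_(j <- s | P j) F j y).
  by apply: functional_extensionality => t; rewrite big_cons.
case Pa: (P a) => //; apply: Sm_plus => //; exact: H.
Qed.

Lemma Sm_sumI (k : nat) (F : 'I_d -> pt d -> R) :
  (forall j, Sm k (F j)) -> Sm k (fun y => sumI (fun j => F j y)).
Proof. move=> H; rewrite /sumI; exact: Sm_sum. Qed.

Lemma Ck_Sm (k : nat) g : Ck k g -> Sm k g.
Proof.
move=> H.
have : forall ks : seq 'I_d, (size ks < k)%nat -> forall i x, ex_deriv (dpart ks g) i x.
  by move=> ks Hs i x; case: (H ks (ltnW Hs)) => _ /(_ Hs i x).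
clear H; elim: k g => [//|k IH] g H; split.
  by move=> i x; exact: (H [::]).
move=> i; apply: IH => ks Hs j x.
have := H (rcons ks i); rewrite size_rcons ltnS => /(_ Hs j x).
by rewrite /dpart foldr_rcons.
Qed.

Definition Dv (c : pt d -> 'I_d -> R) g : pt d -> R :=
  fun x => sumI (fun k => c x k * partial k g x).

Lemma Dv_plus c g h x : Sm 1 g -> Sm 1 h ->
  Dv c (fun y => g y + h y) x = Dv c g x + Dv c h x.
Proof.
move=> [Hg _] [Hh _]; rewrite /Dv /sumI -big_split /=; apply: eq_bigr => k _.
rewrite partial_plus_fun //; ring.
Qed.

Lemma Dv_mult c g h x : Sm 1 g -> Sm 1 h ->
  Dv c (fun y => g y * h y) x = Dv c g x * h x + g x * Dv c h x.
Proof.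
move=> [Hg _] [Hh _]; rewrite /Dv /sumI big_distrl big_distrr -big_split /=; apply: eq_bigr => k _.
rewrite partial_mult_fun //; ring.
Qed.

Lemma Dv_sum c (T : Type) (s : seq T) (P : pred T) (F : T -> pt d -> R) x :
  (forall j, P j -> Sm 1 (F j)) ->
  Dv c (fun y => \big[Rplus/0]_(j <- s | P j) F j y) x =
  \big[Rplus/0]_(j <- s | P j) Dv c (F j) x.
Proof.
move=> H; rewrite /Dv /sumI.
rewrite (eq_bigr (fun k => c x k * \big[Rplus/0]_(j <- s | P j) partial k (F j) x)); last first.
  move=> k _; rewrite partial_sum_fun //; by move=> j y Pj; case: (H j Pj) => /(_ k y).
rewrite exchange_big /=; apply: eq_bigr => k _; by rewrite big_distrr.
Qed.

Lemma Dv_sumI c (F : 'I_d -> pt d -> R) x :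
  (forall j, Sm 1 (F j)) ->
  Dv c (fun y => sumI (fun j => F j y)) x = sumI (fun j => Dv c (F j) x).
Proof. move=> H; rewrite /sumI; exact: Dv_sum. Qed.

Lemma Dv_const c (r : R) x : Dv c (fun _ => r) x = 0.
Proof. rewrite /Dv /sumI big1 // => k _; rewrite partial_const; ring. Qed.

Lemma Dv_scal c (r : R) g x : Sm 1 g -> Dv c (fun y => g y * r) x = Dv c g x * r.
Proof.
move=> Hg; rewrite (@Dv_mult c g (fun _ => r) x) //; last exact: Sm_const.
rewrite Dv_const; ring.
Qed.

End Smooth.

Section DA.
Variable d : nat.
Local Open Scope R_scope.

Lemma DA_Sm (n : nat) (V : nat -> pt d -> 'I_d -> R) (ks : seq nat) (g : pt d -> R) :
  Sm (n + size ks) g -> (forall k I, k \in ks -> Sm n (fun x => V k x I)) ->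
  Sm n (deriv_apply g (map V ks)).
Proof.
elim: ks g => [|k ks IH] g Hg HV /=; first by rewrite addn0 in Hg.
apply: Sm_sumI => J; apply: Sm_mult.
  apply: IH; last by move=> k' I Hk'; apply: HV; rewrite inE Hk' orbT.
  by rewrite addnS in Hg; case: Hg => _ H; exact: H.
by apply: HV; rewrite inE eqxx.
Qed.

Lemma big_orb_disj (s : seq nat) (A B : pred nat) (F : nat -> R) :
  (forall p, ~~ (A p && B p)) ->
  \big[Rplus/0]_(p <- s | A p || B p) F p =
  \big[Rplus/0]_(p <- s | A p) F p + \big[Rplus/0]_(p <- s | B p) F p.
Proof.
move=> H; rewrite big_mkcond; rewrite (big_mkcond A); rewrite (big_mkcond B) -big_split /=; apply: eq_bigr => p _.
move: (H p); case: (A p); case: (B p) => //= _; ring.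
Qed.

Lemma GL (c : pt d -> 'I_d -> R) (V : nat -> pt d -> 'I_d -> R)
  (W : nat -> nat -> pt d -> 'I_d -> R) (D : nat -> nat -> bool) (P : seq nat) (ks : seq nat) :
  (forall k I, k \in ks -> Sm 1 (fun x => V k x I)) ->
  (forall k x I, k \in ks -> Dv c (fun y => V k y I) x = \big[Rplus/0]_(p <- P | D k p) W p k x I) ->
  (forall p k, k \in ks -> ~~ D k p -> W p k = V k) ->
  (forall p, count (fun k => D k p) ks <= 1)%nat ->
  forall (g : pt d -> R), Sm (size ks).+1 g ->
  forall x, Dv c (deriv_apply g (map V ks)) x =
     deriv_apply g (rcons (map V ks) c) x +
     \big[Rplus/0]_(p <- P | has (fun k => D k p) ks) deriv_apply g (map (W p) ks) x.
Proof.
elim: ks => [|k ks IH] HV HD HW Hc g Hg x.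
  rewrite /= big_pred0 // Rplus_0_r /Dv /sumI; apply: eq_bigr => J _ /=; ring.
have HV' : forall k' I, k' \in ks -> Sm 1 (fun x => V k' x I).
  by move=> k' I Hk'; apply: HV; rewrite inE Hk' orbT.
have HD' : forall k' x I, k' \in ks -> Dv c (fun y => V k' y I) x = \big[Rplus/0]_(p <- P | D k' p) W p k' x I.
  by move=> k' y I Hk'; apply: HD; rewrite inE Hk' orbT.
have HW' : forall p k', k' \in ks -> ~~ D k' p -> W p k' = V k'.
  by move=> p k' Hk'; apply: HW; rewrite inE Hk' orbT.
have Hc' : forall p, (count (fun k => D k p) ks <= 1)%nat.
  by move=> p; move: (Hc p) => /=; case: (D k p) => //= /ltnW.
have Hk : k \in k :: ks by rewrite inE eqxx.
have Hg' : forall J, Sm (size ks).+1 (partial J g) by move=> J; case: Hg => _ H; exact: H.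
have U0 : forall p, D k p -> ~~ has (fun k => D k p) ks.
  move=> p Dp; move: (Hc p) => /=; rewrite Dp has_count add1n ltnS leqn0 => /eqP ->; done.
have U1 : forall p, D k p -> map (W p) ks = map V ks.
  move=> p Dp; apply/eq_in_map => k' Hk'; apply: HW' => //.
  by apply: contra (U0 _ Dp) => Dk'; apply/hasP; exists k'.
set A := fun J => deriv_apply (partial J g) (map V ks).
have SA : forall J, Sm 1 (A J).
  move=> J; apply: DA_Sm => //; exact: Hg'.
have SB : forall J, Sm 1 (fun y => V k y J) by move=> J; exact: HV.
have E1 : Dv c (deriv_apply g (map V (k :: ks))) x =
   sumI (fun J => Dv c (A J) x * V k x J + A J x * Dv c (fun y => V k y J) x).
  have -> : deriv_apply g (map V (k :: ks)) = fun y => sumI (fun J => A J y * V k y J) by [].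
  etransitivity; first apply: (@Dv_sumI d c (fun J y => (A J y * V k y J)%R)).
    move=> J; exact: Sm_mult.
  apply: eq_bigr => J _; exact: Dv_mult.
rewrite E1 /sumI.
rewrite (eq_bigr (fun J => deriv_apply (partial J g) (rcons (map V ks) c) x * V k x J
   + \big[Rplus/0]_(p <- P | has (fun k => D k p) ks) (deriv_apply (partial J g) (map (W p) ks) x * V k x J)
   + \big[Rplus/0]_(p <- P | D k p) (A J x * W p k x J))); last first.
  move=> J _; rewrite /A (IH HV' HD' HW' Hc' _ (Hg' J)) (HD _ _ _ Hk) Rmult_plus_distr_r big_distrl big_distrr /=; ring.
rewrite !big_split /=.
rewrite big_orb_disj; last by move=> p; case Dp: (D k p) => //=; exact: U0.
rewrite [X in _ + X + _]exchange_big [X in _ + _ + X]exchange_big /=.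
rewrite /sumI Rplus_assoc; congr (_ + _); rewrite Rplus_comm; congr (_ + _); apply: eq_bigr => p Hp.
  by apply: eq_bigr => J _; rewrite (U1 _ Hp).
have nDp : ~~ D k p by apply: contraL Hp => /U0.
by apply: eq_bigr => J _; rewrite (HW _ _ Hk nDp).
Qed.
End DA.

Definition colour_eqb (c1 c2 : colour) : bool :=
  match c1, c2 with
  | Tau, Tau => true
  | Sig a, Sig b => a == b
  | _, _ => false
  end.
Lemma colour_eqP : Equality.axiom colour_eqb.
Proof.
by case=> [|a] [|b] /=; try constructor => //; apply: (iffP eqP) => [->|[]].
Qed.
HB.instance Definition _ := hasDecEq.Build colour colour_eqP.

Definition valid (t : tree) := forall j, (0 < j)%nat -> (father t j < j)%nat.

Lemma father_rcons t e j : father (rcons t e) j =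
  if (j.-1 < size t)%nat then father t j else if j.-1 == size t then e.1 else 0%nat.
Proof. by rewrite /father nth_rcons; case: ifP => //; case: ifP. Qed.

Lemma colour_rcons t e j : colour_of (rcons t e) j =
  if (j.-1 < size t)%nat then colour_of t j else if j.-1 == size t then e.2 else Tau.
Proof. by rewrite /colour_of nth_rcons; case: ifP => //; case: ifP. Qed.

Lemma colour_rcons_old t e j : (0 < j)%nat -> j != (size t).+1 -> colour_of (rcons t e) j = colour_of t j.
Proof.
move=> H1 H2; rewrite colour_rcons; case: ifP => // H3.
rewrite ifN; last by apply/eqP; lia.
by rewrite /colour_of nth_default //; lia.
Qed.

Lemma father0 t : valid t -> father t 0 = 0%nat.
Proof. by move=> Hv; move: (Hv 1%nat isT); rewrite /father /= ltnS leqn0 => /eqP. Qed.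

Lemma father_le t j : valid t -> (father t j <= j)%nat.
Proof. by move=> Hv; case: j => [|j]; [rewrite father0 | apply: ltnW; apply: Hv]. Qed.

Lemma valid_rcons t p col : valid t -> (p < (size t).+1)%nat -> valid (rcons t (p, col)).
Proof.
move=> Hv Hp j Hj; rewrite father_rcons; case: ifP => H1; first exact: Hv.
case: ifP => H2 //=; move/eqP: H2 => H2; lia.
Qed.

Lemma mem_children t i k : (k \in children t i) = ((0 < k <= size t)%nat && (father t k == i)).
Proof. by rewrite /children mem_filter mem_iota andbC; congr (_ && _); apply/idP/idP; lia. Qed.

Lemma children_uniq t i : uniq (children t i).
Proof. apply: filter_uniq; exact: iota_uniq. Qed.

Lemma children_size t i : (size (children t i) <= size t)%nat.
Proof. by rewrite /children size_filter; apply: leq_trans (count_size _ _) _; rewrite size_iota. Qed.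

Lemma children_gt t i k : valid t -> k \in children t i -> (i < k)%nat.
Proof. by move=> Hv; rewrite mem_children => /andP [/andP [H0 _] /eqP <-]; apply: Hv. Qed.

Lemma children_nil t i : valid t -> (size t <= i)%nat -> children t i = [::].
Proof.
move=> Hv Hi; rewrite /children (@eq_in_filter _ _ pred0); first by elim: (iota _ _).
move=> j; rewrite mem_iota => /andP [H1 H2] /=; apply/eqP => E.
have := Hv j H1; rewrite E; lia.
Qed.

Lemma children_rcons t p col i : children (rcons t (p, col)) i =
  if p == i then rcons (children t i) (size t).+1 else children t i.
Proof.
rewrite /children size_rcons -(addn1 (size t)) iotaD filter_cat.
have -> : [seq j <- iota 1 (size t) | father (rcons t (p, col)) j == i] =
          [seq j <- iota 1 (size t) | father t j == i].
  apply: eq_in_filter => j; rewrite mem_iota => /andP [H1 H2].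
  by rewrite father_rcons ifT //; lia.
rewrite /= father_rcons add1n /= ltnn eqxx /=.
by case: eqP => _; rewrite ?cats1 ?cats0 ?addn1.
Qed.

Definition desc (t : tree) (i p : nat) := exists n, iter n (father t) p = i.

Lemma iter_le t n p : valid t -> (iter n (father t) p <= p)%nat.
Proof. move=> Hv; elim: n => [//|n IH] /=; exact: leq_trans (father_le _ Hv) IH. Qed.

Lemma desc_refl t i : desc t i i.
Proof. by exists 0%nat. Qed.

Lemma desc_child t i k p : k \in children t i -> desc t k p -> desc t i p.
Proof.
rewrite mem_children => /andP [_ /eqP Hf] [n Hn]; exists n.+1; by rewrite /= Hn.
Qed.

Lemma desc_gt t i k p : valid t -> k \in children t i -> desc t k p -> (i < p)%nat.
Proof.
move=> Hv Hk [n Hn]; have := children_gt Hv Hk; have := iter_le n p Hv; rewrite Hn; lia.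
Qed.

Lemma desc_split t i p : valid t -> (p <= size t)%nat -> desc t i p ->
  p = i \/ exists2 k, k \in children t i & desc t k p.
Proof.
move=> Hv Hp [n]; elim: n => [/= ->|n IH]; first by left.
rewrite /=; set k := iter n (father t) p => Hk.
case: (posnP k) => Hk0.
  by apply: IH; rewrite -Hk Hk0 father0.
right; exists k; last by exists n.
rewrite mem_children Hk eqxx andbT Hk0 /=; apply: leq_trans (iter_le _ _ Hv) Hp.
Qed.

Lemma desc_uniq t i k1 k2 p : valid t -> k1 \in children t i -> k2 \in children t i ->
  desc t k1 p -> desc t k2 p -> k1 = k2.
Proof.
move=> Hv H1 H2 [n1 E1] [n2 E2].
wlog le12 : k1 k2 n1 n2 H1 H2 E1 E2 / (n1 <= n2)%nat.
  move=> Hw; case: (leqP n1 n2) => [le|/ltnW le]; first exact: (Hw k1 k2 n1 n2).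
  by symmetry; apply: (Hw k2 k1 n2 n1).
move: E2; rewrite -(subnK le12) iterD E1; case: (n2 - n1)%nat => [//|m].
rewrite iterSr; move: H1; rewrite mem_children => /andP [_ /eqP ->] => E.
have := iter_le m i Hv; rewrite E; have := children_gt Hv H2; lia.
Qed.

Lemma desc_root t p : valid t -> desc t 0 p.
Proof.
move=> Hv; exists p; suff : forall n, (iter n (father t) p <= p - n)%nat.
  by move=> /(_ p); rewrite subnn leqn0 => /eqP.
elim=> [|n IH] /=; first by rewrite subn0.
case: (posnP (iter n (father t) p)) => H0; first by rewrite H0 father0.
have := Hv _ H0; lia.
Qed.

Definition descb t i p : bool := if excluded_middle_informative (desc t i p) then true else false.

Lemma descbP t i p : reflect (desc t i p) (descb t i p).
Proof. by rewrite /descb; case: excluded_middle_informative => H; constructor. Qed.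

Lemma count_le1 (s : seq nat) (P : pred nat) : uniq s ->
  (forall a b, a \in s -> b \in s -> P a -> P b -> a = b) -> (count P s <= 1)%nat.
Proof.
elim: s => [//|x s IH] /= /andP [nx us] H.
case Px: (P x) => /=.
  rewrite add1n ltnS leqNgt -has_count; apply/negP => /hasP [y Hy Py].
  have E := H x y (mem_head _ _) (mem_behead (s := x :: s) Hy) Px Py; by rewrite E Hy in nx.
apply: IH => // a b Ha Hb; apply: H; [exact: (mem_behead (s := x :: s)) | exact: (mem_behead (s := x :: s))].
Qed.

Lemma size_length (T : Type) (s : seq T) : size s = length s.
Proof. by elim: s => //= x s ->. Qed.

Definition sigok (r : nat) (t : tree) : bool :=
  all (fun e : nat * colour => if e.2 is Sig k then (k < r)%nat else true) t.

Lemma colour_sigok r t i : sigok r t -> if colour_of t i is Sig k then (k < r)%nat else true.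
Proof.
move=> /all_nthP H; rewrite /colour_of.
case: (ltnP i.-1 (size t)) => Hi; first exact: (H (0%nat, Tau)).
by rewrite nth_default.
Qed.

Section Fnodes.
Variables (d m : nat) (f : pt d -> R) (a : 'I_d -> pt d -> R) (b : 'I_d -> 'I_m -> pt d -> R).
Local Open Scope R_scope.

Lemma gcol_ext (J K : seq 'I_m) col I :
  (if col is Sig k then (k < size J)%nat else true) -> gcol a b (J ++ K) col I = gcol a b J col I.
Proof.
case: col => [//|k] /= Hk; rewrite List.nth_error_app1 //; rewrite -size_length; exact/ltP.
Qed.

Lemma Fnode_Jext t (J K : seq 'I_m) F i : sigok (size J) t ->
  Fnode a b t (J ++ K) F i = Fnode a b t J F i.
Proof.
move=> Hs; elim: F i => [//|F IH] i /=.
have -> : Fnode a b t (J ++ K) F = Fnode a b t J F by apply: functional_extensionality.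
apply: functional_extensionality => x; apply: functional_extensionality => I.
by rewrite gcol_ext //; apply: colour_sigok.
Qed.

Lemma Fel_Jext t (J K : seq 'I_m) : sigok (size J) t -> Fel f a b t (J ++ K) = Fel f a b t J.
Proof.
move=> Hs; rewrite /Fel.
by have -> : Fnode a b t (J ++ K) (nnodes t) = Fnode a b t J (nnodes t)
  by apply: functional_extensionality => i; apply: Fnode_Jext.
Qed.

Lemma Fnode_notdesc t p col J F k : (0 < k)%nat -> k != (size t).+1 -> ~ desc t k p ->
  Fnode a b (rcons t (p, col)) J F k = Fnode a b t J F k.
Proof.
elim: F k => [//|F IH] k Hk HkN Hd /=.
rewrite children_rcons ifN; last by apply/eqP => E; apply: Hd; rewrite -E; exact: desc_refl.
rewrite colour_rcons_old //.
have -> : map (Fnode a b (rcons t (p, col)) J F) (children t k) = map (Fnode a b t J F) (children t k).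
  apply/eq_in_map => k' Hk'; apply: IH.
  - by move: Hk'; rewrite mem_children => /andP [/andP [] ].
  - by move: Hk'; rewrite mem_children => /andP [/andP [_ H] _]; apply/eqP; lia.
  - by move=> H; apply: Hd; exact: desc_child Hk' H.
done.
Qed.

Lemma Fnode_N t p col J F : valid t -> (p < (size t).+1)%nat -> (0 < F)%nat ->
  Fnode a b (rcons t (p, col)) J F (size t).+1 = fun x I => gcol a b J col I x.
Proof.
move=> Hv Hp; case: F => [//|F] _ /=.
rewrite children_nil; last by rewrite size_rcons.
  by rewrite colour_rcons /= ltnn eqxx.
exact: valid_rcons.
Qed.

Lemma Fnode_fuel t J : valid t -> forall F F' i, (size t < i + F)%nat -> (0 < F)%nat -> (F <= F')%nat ->
  Fnode a b t J F i = Fnode a b t J F' i.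
Proof.
move=> Hv; elim=> [//|F IH] [|F'] i H1 H2 H3 //=.
have -> : map (Fnode a b t J F) (children t i) = map (Fnode a b t J F') (children t i).
  apply/eq_in_map => k Hk; have := children_gt Hv Hk.
  move: Hk; rewrite mem_children => /andP [/andP [Hk1 Hk2] _] Hik.
  apply: IH; lia.
done.
Qed.

Lemma Fnode_Sm (n : nat) t J : (forall col I, Sm (n + size t) (gcol a b J col I)) ->
  forall F k I, Sm n (fun x => Fnode a b t J F k x I).
Proof.
move=> Hg; elim=> [|F IH] k I /=; first exact: Sm_const.
apply: DA_Sm => //; apply: Sm_le (Hg _ _); rewrite leq_add2l; exact: children_size.
Qed.

Lemma Fel_Sm (n : nat) t J : Sm (n + size t) f -> (forall col I, Sm (n + size t) (gcol a b J col I)) ->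
  Sm n (Fel f a b t J).
Proof.
move=> Hf Hg; apply: DA_Sm => //; first by apply: Sm_le Hf; rewrite leq_add2l; exact: children_size.
move=> k I _; exact: Fnode_Sm.
Qed.

Lemma eq_big_filter_seq (s : seq nat) (P Q : pred nat) (F G : nat -> R) :
  {in s, P =1 Q} -> (forall p, p \in s -> Q p -> F p = G p) ->
  \big[Rplus/0]_(p <- s | P p) F p = \big[Rplus/0]_(p <- s | Q p) G p.
Proof.
move=> HPQ HFG; rewrite -[LHS]big_filter -[RHS]big_filter (eq_in_filter HPQ).
apply: eq_big_seq => p; rewrite mem_filter => /andP [Qp Hp]; exact: HFG.
Qed.

Definition TLP t col J i := forall F g, (i <= size t)%nat -> ((size t).+1 < i + F)%nat ->
  Sm (size t).+1 g -> forall x,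
  Dv (fun x I => gcol a b J col I x) (deriv_apply g (map (Fnode a b t J F) (children t i))) x =
  \big[Rplus/0]_(p <- iota 0 (size t).+1 | descb t i p)
     deriv_apply g (map (Fnode a b (rcons t (p, col)) J F) (children (rcons t (p, col)) i)) x.

Lemma TL_step t col J i : valid t -> (forall col' I, Sm (size t).+1 (gcol a b J col' I)) ->
  (forall k, k \in children t i -> TLP t col J k) -> TLP t col J i.
Proof.
move=> Hv HG IH F g Hi HF Hg x.
case: F HF => [|F0] HF; first lia.
set c := fun x I => gcol a b J col I x.
set ch := children t i.
set V := Fnode a b t J F0.+1.
set W := fun p => Fnode a b (rcons t (p, col)) J F0.+1.
have h1 : forall k I, k \in ch -> Sm 1 (fun x => V k x I).
  move=> k I _; apply: Fnode_Sm => col' I'; exact: HG.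
have h2 : forall k x I, k \in ch ->
    Dv c (fun y => V k y I) x = \big[Rplus/0]_(p <- iota 0 (size t).+1 | descb t k p) W p k x I.
  move=> k y I Hk.
  have Hik := children_gt Hv Hk.
  have Hks : (k <= size t)%nat by move: Hk; rewrite mem_children => /andP [/andP [_ ?] _].
  transitivity (Dv c (deriv_apply (gcol a b J (colour_of t k) I) (map (Fnode a b t J F0) (children t k))) y);
    first by [].
  rewrite (IH k Hk F0 _ Hks) //; last lia.
  apply: eq_bigr => p _; rewrite /W /= colour_rcons_old //; [lia | apply/eqP; lia].
have h3 : forall p k, k \in ch -> ~~ descb t k p -> W p k = V k.
  move=> p k Hk /descbP Hd; move: Hk; rewrite mem_children => /andP [/andP [Hk1 Hk2] _].
  apply: Fnode_notdesc => //; apply/eqP; lia.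
have h4 : forall p, (count (fun k => descb t k p) ch <= 1)%nat.
  move=> p; apply: count_le1; first exact: children_uniq.
  move=> k1 k2 H1 H2 /descbP D1 /descbP D2; exact: desc_uniq Hv H1 H2 D1 D2.
have Hg' : Sm (size ch).+1 g by apply: Sm_le Hg; rewrite ltnS; exact: children_size.
rewrite (@GL d c V W (descb t) (iota 0 (size t).+1) ch h1 h2 h3 h4 g Hg' x).
rewrite -[RHS]big_filter [RHS](bigD1_seq i); first last.
    exact: filter_uniq (iota_uniq _ _).
  rewrite mem_filter mem_iota /=; apply/andP; split; [apply/descbP; exact: desc_refl | lia].
rewrite [X in _ = _ + X]big_filter_cond.
congr (_ + _).
  have Hi1 : (i < (size t).+1)%nat by lia.
  rewrite children_rcons eqxx map_rcons (@Fnode_N t i col J F0.+1 Hv Hi1 isT).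
  congr (deriv_apply g (rcons _ _) x).
  apply/eq_in_map => k Hk; have Hik := children_gt Hv Hk.
  move: (Hk); rewrite mem_children => /andP [/andP [Hk1 Hk2] _].
  symmetry; apply: Fnode_notdesc => //; first by apply/eqP; lia.
  move=> [n Hn]; have := iter_le n i Hv; rewrite Hn; lia.
apply: eq_big_filter_seq.
  move=> p; rewrite mem_iota add0n => Hp.
  apply/idP/idP.
    move=> /hasP [k Hk /descbP Hkp]; apply/andP; split; first by apply/descbP; exact: desc_child Hk Hkp.
    apply/eqP => E; have := desc_gt Hv Hk Hkp; lia.
  move=> /andP [/descbP Hd Hpi]; case: (desc_split Hv _ Hd) => [|E|[k Hk Hkp]].
  - lia.
  - by rewrite E eqxx in Hpi.
  - by apply/hasP; exists k => //; apply/descbP.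
by move=> p _ /andP [_ Hpi]; rewrite children_rcons ifN.
Qed.

Lemma TL t col J : valid t -> (forall col' I, Sm (size t).+1 (gcol a b J col' I)) ->
  forall i, TLP t col J i.
Proof.
move=> Hv HG i; have [n Hn] : exists n, (size t - i <= n)%nat by exists (size t - i)%nat.
elim: n i Hn => [|n IHn] i Hn; apply: TL_step => // k Hk;
  have := children_gt Hv Hk; move: Hk; rewrite mem_children => /andP [/andP [Hk1 Hk2] _] Hik.
  lia.
apply: IHn; lia.
Qed.

Lemma Fel_D t col J : valid t -> Sm (size t).+1 f -> (forall col' I, Sm (size t).+1 (gcol a b J col' I)) ->
  forall x, Dv (fun x I => gcol a b J col I x) (Fel f a b t J) x =
  \big[Rplus/0]_(p <- iota 0 (size t).+1) Fel f a b (t ++ [:: (p, col)]) J x.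
Proof.
move=> Hv Hf HG x; rewrite /Fel.
have -> : map (Fnode a b t J (nnodes t)) (children t 0) = map (Fnode a b t J (size t).+2) (children t 0).
  apply/eq_in_map => k Hk; apply: Fnode_fuel => //; have := children_gt Hv Hk; rewrite /nnodes; lia.
rewrite (@TL t col J Hv HG 0%nat (size t).+2 f) //; try lia.
rewrite (eq_bigl xpredT); last by move=> p; apply/descbP; exact: desc_root.
apply: eq_bigr => p _; by rewrite cats1 /nnodes size_rcons.
Qed.

End Fnodes.

Definition ext (t : tree) : seq tree :=
  [seq t ++ [:: (p, Tau)] | p <- iota 0 (nnodes t)] ++
  [seq t ++ [:: (p, Sig (snum t)./2); (q, Sig (snum t)./2)] | p <- iota 0 (nnodes t), q <- iota 0 (nnodes t).+1].

Fixpoint gen (n : nat) : seq tree := if n is n'.+1 then flatten (map ext (gen n')) else [:: [::]].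

Lemma snum_det t p : snum (t ++ [:: (p, Tau)]) = snum t.
Proof. rewrite /snum count_cat /=; lia. Qed.
Lemma dnum_det t p : dnum (t ++ [:: (p, Tau)]) = (dnum t).+1.
Proof. rewrite /dnum count_cat /=; lia. Qed.
Lemma snum_sto t p q r r' : snum (t ++ [:: (p, Sig r); (q, Sig r')]) = (snum t).+2.
Proof. rewrite /snum count_cat /=; lia. Qed.
Lemma dnum_sto t p q r r' : dnum (t ++ [:: (p, Sig r); (q, Sig r')]) = dnum t.
Proof. rewrite /dnum count_cat /=; lia. Qed.
Lemma rho_det t p : rho (t ++ [:: (p, Tau)]) = (rho t).+1.
Proof. by rewrite /rho snum_det dnum_det. Qed.
Lemma rho_sto t p q r r' : rho (t ++ [:: (p, Sig r); (q, Sig r')]) = (rho t).+1.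
Proof. by rewrite /rho snum_sto dnum_sto /= addnS. Qed.

Lemma cat2_rcons (T : Type) (t : seq T) x y : t ++ [:: x; y] = rcons (rcons t x) y.
Proof. by rewrite -!cats1 -catA. Qed.

Lemma sigok_le r r' t : (r <= r')%nat -> sigok r t -> sigok r' t.
Proof.
move=> le; apply: sub_all => -[p [|k]] //= H; exact: leq_trans H le.
Qed.

Lemma LTS_inv t : LTS t -> [/\ valid t, ~~ odd (snum t) & sigok (snum t)./2 t].
Proof.
elim=> [|t0 p Ht [Hv Ho Hs] Hp|t0 p q Ht [Hv Ho Hs] Hp Hq].
- split => //; move=> j Hj; rewrite /father nth_default //.
- rewrite snum_det; split => //; first by rewrite cats1; exact: valid_rcons.
  by rewrite /sigok all_cat; apply/andP; split; [exact: Hs|].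
- rewrite snum_sto /=; split.
  + rewrite cat2_rcons; apply: valid_rcons; first exact: valid_rcons.
    by rewrite size_rcons.
  + by rewrite negbK.
  + rewrite /sigok all_cat /= ltnSn andbT andbT; exact: (sigok_le (leqnSn _) Hs).
Qed.

Lemma size_rho t : ~~ odd (snum t) -> (size t <= 2 * rho t)%nat.
Proof.
move=> Ho; have Hs : size t = (dnum t + snum t)%nat.
  rewrite /dnum /snum -(count_predC (fun e : nat * colour => is_tau e.2)); congr (_ + _)%nat.
  by apply: eq_count => -[? []].
have := odd_double_half (snum t); rewrite (negbTE Ho) add0n -muln2 => E.
rewrite /rho Hs; lia.
Qed.

Lemma gen_sound n t : t \in gen n -> LTS t /\ rho t = n.
Proof.
elim: n t => [|n IH] t /=.
  by rewrite inE => /eqP ->; split => //; constructor.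
move=> /flatten_mapP [t0 Ht0]; have [L0 R0] := IH t0 Ht0.
rewrite mem_cat => /orP [/mapP [p Hp ->]|/allpairsP [[p q] /= [Hp Hq ->]]].
  split; last by rewrite rho_det R0.
  apply: LTS_det; [exact: L0 | move: Hp; rewrite mem_iota /nnodes; lia].
split; last by rewrite rho_sto R0.
apply: LTS_sto; [exact: L0 | have := (Hp : p \in iota 0 (nnodes t0)) | have := (Hq : q \in iota 0 (nnodes t0).+1)]; rewrite mem_iota /nnodes; lia.
Qed.

Lemma gen_complete t : LTS t -> t \in gen (rho t).
Proof.
elim=> [|t0 p Ht IH Hp|t0 p q Ht IH Hp Hq]; first by rewrite mem_head.
  rewrite rho_det /=; apply/flatten_mapP; exists t0 => //.
  rewrite mem_cat; apply/orP; left; apply/mapP; exists p => //; rewrite mem_iota; move: Hp; rewrite /nnodes; lia.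
rewrite rho_sto /=; apply/flatten_mapP; exists t0 => //.
rewrite mem_cat; apply/orP; right; apply/allpairsP; exists (p, q); split => //; rewrite mem_iota /=; move: Hp Hq; rewrite /nnodes; lia.
Qed.

Definition par (e : tree) : tree :=
  if (last (0%nat, Tau) e).2 is Tau then take (size e).-1 e else take (size e).-2 e.

Lemma par_ext t e : e \in ext t -> par e = t.
Proof.
rewrite mem_cat => /orP [/mapP [p _ ->]|/allpairsP [[p q] /= [_ _ ->]]].
  by rewrite /par last_cat /= size_cat /= addn1 /= take_size_cat.
by rewrite /par last_cat /= size_cat /= addn2 /= take_size_cat.
Qed.

Lemma ext_uniq t : uniq (ext t).
Proof.
rewrite cat_uniq; apply/and3P; split.
- rewrite map_inj_uniq ?iota_uniq // => p1 p2 /(f_equal (drop (size t))).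
  by rewrite !drop_size_cat // => -[].
- apply/hasPn => e /allpairsP [[p q] [_ _ ->]]; apply/negP => /mapP [p' _].
  by move=> /(f_equal (fun s => (last (0%nat, Tau) s).2)); rewrite !last_cat.
- apply: allpairs_uniq; try exact: iota_uniq.
  move=> [p1 q1] [p2 q2] _ _ /= /(f_equal (drop (size t))).
  by rewrite !drop_size_cat // => -[-> ->].
Qed.

Lemma gen_uniq n : uniq (gen n).
Proof.
elim: n => [//|n] /=; elim: (gen n) => [//|t L IHL] /andP [tL uL].
change (uniq (ext t ++ flatten (map ext L))).
rewrite cat_uniq ext_uniq IHL // andbT; apply/hasPn => e /flatten_mapP [t' Ht' He'].
apply/negP => He; have E1 := par_ext He; have E2 := par_ext He'.
by move: tL; rewrite -E1 E2 Ht'.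
Qed.

Lemma sum_gen n (H : tree -> R) :
  \big[Rplus/0%R]_(e <- gen n.+1) H e =
  \big[Rplus/0%R]_(t <- gen n)
    (\big[Rplus/0%R]_(p <- iota 0 (nnodes t)) H (t ++ [:: (p, Tau)]) +
     \big[Rplus/0%R]_(p <- iota 0 (nnodes t)) \big[Rplus/0%R]_(q <- iota 0 (nnodes t).+1)
        H (t ++ [:: (p, Sig (snum t)./2); (q, Sig (snum t)./2)]))%R.
Proof.
rewrite /= big_flatten big_map; apply: eq_bigr => t _.
by rewrite big_cat big_map big_allpairs_dep.
Qed.

Section SumJ.
Variable m : nat.
Local Open Scope R_scope.

Lemma sumJ_ext (r : nat) (G G' : seq 'I_m -> R) :
  (forall J, size J = r -> G J = G' J) -> sumJ r G = sumJ r G'.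
Proof.
elim: r G G' => [|r IH] G G' H /=; first exact: H.
apply: eq_bigr => j _; apply: IH => J HJ; apply: H; by rewrite /= HJ.
Qed.

Lemma sumJ_big (r : nat) (T : Type) (s : seq T) (G : T -> seq 'I_m -> R) :
  sumJ r (fun J => \big[Rplus/0]_(p <- s) G p J) = \big[Rplus/0]_(p <- s) sumJ r (G p).
Proof.
elim: r G => [//|r IH] G /=.
rewrite (eq_bigr (fun j => \big[Rplus/0]_(p <- s) sumJ r (fun J => G p (j :: J)))); last first.
  move=> j _; exact: (IH (fun p J => G p (j :: J))).
exact: exchange_big.
Qed.

Lemma sumJ_scal (r : nat) (c : R) (G : seq 'I_m -> R) :
  sumJ r (fun J => c * G J) = c * sumJ r G.
Proof.
elim: r G => [//|r IH] G /=; rewrite big_distrr /=; apply: eq_bigr => j _.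
exact: (IH (fun J => G (j :: J))).
Qed.

Lemma sumJ_rcons (r : nat) (G : seq 'I_m -> R) :
  sumJ r.+1 G = sumJ r (fun J => \big[Rplus/0]_(j < m) G (rcons J j)).
Proof.
elim: r G => [//|r IH] G.
rewrite [LHS]/=; apply: eq_bigr => j _; exact: (IH (fun J => G (j :: J))).
Qed.

Variable d : nat.

Lemma Sm_sumJ (n r : nat) (G : seq 'I_m -> pt d -> R) :
  (forall J, Sm n (G J)) -> Sm n (fun x => sumJ r (fun J => G J x)).
Proof.
elim: r G => [|r IH] G H /=; first exact: H.
apply: (@Sm_sum d n _ _ _ (fun j x => sumJ r (fun J => G (j :: J) x))) => j _.
exact: (IH (fun J => G (j :: J))).
Qed.

Lemma Dv_sumJ c (r : nat) (G : seq 'I_m -> pt d -> R) x :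
  (forall J, Sm 1 (G J)) -> Dv c (fun y => sumJ r (fun J => G J y)) x = sumJ r (fun J => Dv c (G J) x).
Proof.
elim: r G => [|r IH] G H //=.
rewrite (@Dv_sum d c _ _ _ (fun j y => sumJ r (fun J => G (j :: J) y))); last first.
  move=> j _; apply: (@Sm_sumJ 1%nat r (fun J => G (j :: J))) => J; exact: H.
apply: eq_bigr => j _; exact: (IH (fun J => G (j :: J))).
Qed.

End SumJ.

Lemma swap3_rev (I1 I2 I3 : Type) (s1 : seq I1) (s2 : seq I2) (s3 : seq I3) (F : I1 -> I2 -> I3 -> R) :
  \big[Rplus/0%R]_(i <- s1) \big[Rplus/0%R]_(j <- s2) \big[Rplus/0%R]_(k <- s3) F i j k =
  \big[Rplus/0%R]_(k <- s3) \big[Rplus/0%R]_(j <- s2) \big[Rplus/0%R]_(i <- s1) F i j k.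
Proof.
rewrite exchange_big /=.
rewrite (eq_bigr (fun j => \big[Rplus/0%R]_(k <- s3) \big[Rplus/0%R]_(i <- s1) F i j k)); last first.
  by move=> j _; rewrite exchange_big.
exact: exchange_big.
Qed.

Lemma swap3_rot (I1 I2 I3 : Type) (s1 : seq I1) (s2 : seq I2) (s3 : seq I3) (F : I1 -> I2 -> I3 -> R) :
  \big[Rplus/0%R]_(i <- s1) \big[Rplus/0%R]_(j <- s2) \big[Rplus/0%R]_(k <- s3) F i j k =
  \big[Rplus/0%R]_(k <- s3) \big[Rplus/0%R]_(i <- s1) \big[Rplus/0%R]_(j <- s2) F i j k.
Proof.
rewrite (eq_bigr (fun i => \big[Rplus/0%R]_(k <- s3) \big[Rplus/0%R]_(j <- s2) F i j k)); last first.
  by move=> i _; rewrite exchange_big.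
exact: exchange_big.
Qed.

Section Main.
Variables (d m : nat) (f : pt d -> R) (a : 'I_d -> pt d -> R) (b : 'I_d -> 'I_m -> pt d -> R).
Local Open Scope R_scope.

Lemma LD G x : Sm 2 G -> (forall k j, Sm 1 (b k j)) ->
  L0 a b G x = Dv (fun y k => a k y) G x +
    / 2 * \big[Rplus/0]_(j < m) Dv (fun y k => b k j y) (Dv (fun y k => b k j y) G) x.
Proof.
move=> HG Hb.
have HG1 : forall l, Sm 1 (partial l G) by move=> l; case: HG => _ H; exact: H.
have E : forall j, Dv (fun y k => b k j y) (Dv (fun y k => b k j y) G) x =
   sumI (fun l => \big[Rplus/0]_(k < d) (b k j x * partial k (b l j) x * partial l G x)
                  + \big[Rplus/0]_(k < d) (b l j x * (b k j x * partial k (partial l G) x))).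
  move=> j.
  have -> : Dv (fun y k => b k j y) G = fun y => sumI (fun l => b l j y * partial l G y) by [].
  etransitivity; first apply: (@Dv_sumI d _ (fun l y => b l j y * partial l G y)).
    by move=> l; apply: Sm_mult.
  apply: eq_bigr => l _; rewrite Dv_mult //; rewrite /Dv /sumI big_distrl big_distrr //.
rewrite (eq_bigr _ (fun j _ => E j)) /L0 /atil /Dv /sumI.
rewrite (eq_bigr (fun j => \big[Rplus/0]_(l < d) \big[Rplus/0]_(k < d) (b k j x * partial k (b l j) x * partial l G x)
   + \big[Rplus/0]_(l < d) \big[Rplus/0]_(k < d) (b l j x * (b k j x * partial k (partial l G) x)))); last first.
  by move=> j _; rewrite big_split.
rewrite big_split /=.
rewrite (eq_bigr (fun k => a k x * partial k G x + / 2 * \big[Rplus/0]_(k' < d) \big[Rplus/0]_(l < m)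
     (b k' l x * partial k' (b k l) x * partial k G x))); last first.
  move=> k _; rewrite Rmult_plus_distr_r Rmult_assoc big_distrl /=; congr (_ + / 2 * _).
  apply: eq_bigr => k' _; by rewrite big_distrl.
rewrite big_split /= -big_distrr /=.
rewrite swap3_rot.
have -> : \big[Rplus/0]_(k < d) \big[Rplus/0]_(l < d) \big[Rplus/0]_(j < m)
    (b k j x * b l j x * partial k (partial l G) x) =
  \big[Rplus/0]_(k < d) \big[Rplus/0]_(l < d) \big[Rplus/0]_(j < m)
    (b l j x * (b k j x * partial k (partial l G) x)).
  apply: eq_bigr => k _; apply: eq_bigr => l _; apply: eq_bigr => j _; ring.
have -> : \big[Rplus/0]_(k < d) \big[Rplus/0]_(l < d) \big[Rplus/0]_(j < m)
    (b l j x * (b k j x * partial k (partial l G) x)) =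
  \big[Rplus/0]_(j < m) \big[Rplus/0]_(l < d) \big[Rplus/0]_(k < d)
    (b l j x * (b k j x * partial k (partial l G) x)).
  exact: swap3_rev.
by rewrite Rmult_plus_distr_l Rplus_assoc.
Qed.

Definition Hf (t : tree) (x : pt d) : R :=
  sumJ (snum t)./2 (fun J => Fel f a b t J x / 2 ^ (snum t)./2).

Lemma gcol_Sm (K : nat) J col I : (forall I, Sm K (a I)) -> (forall I j, Sm K (b I j)) ->
  Sm K (gcol a b J col I).
Proof.
move=> HA HB; case: col => [|k] /=; first exact: HA.
case: (List.nth_error J k) => [j|]; [exact: HB | exact: Sm_const].
Qed.

Lemma gcol_rcons (J : seq 'I_m) j I : gcol a b (rcons J j) (Sig (size J)) I = b I j.
Proof.
by rewrite /= -cats1 size_length (List.nth_error_app2 _ _ (Nat.le_refl _)) Nat.sub_diag.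
Qed.

Lemma sumJ_big2 (r : nat) (s1 s2 : seq nat) (G : nat -> nat -> seq 'I_m -> R) :
  \big[Rplus/0]_(p <- s1) \big[Rplus/0]_(q <- s2) sumJ r (G p q) =
  sumJ r (fun J => \big[Rplus/0]_(p <- s1) \big[Rplus/0]_(q <- s2) G p q J).
Proof.
symmetry; etransitivity; first exact: (sumJ_big r s1 (fun p J => \big[Rplus/0]_(q <- s2) G p q J)).
apply: eq_bigr => p _; exact: (sumJ_big r s2 (fun q J => G p q J)).
Qed.

Lemma step (n : nat) (HA : forall I, Sm (2 * n).+2 (a I)) (HB : forall I j, Sm (2 * n).+2 (b I j))
  (HF : Sm (2 * n).+2 f) x :
  L0 a b (fun y => \big[Rplus/0]_(t <- gen n) Hf t y) x = \big[Rplus/0]_(t <- gen n.+1) Hf t x.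
Proof.
have HG : forall J col I, Sm (2 * n).+2 (gcol a b J col I) by move=> J col I; exact: gcol_Sm.
have Tinfo : forall t : tree, t \in gen n -> [/\ valid t, sigok (snum t)./2 t & (size t <= 2 * n)%nat].
  move=> t /gen_sound [Ht Hr]; have [Hv Ho Hs] := LTS_inv Ht; split => //; rewrite -Hr; exact: size_rho.
have SmFel : forall t J (k : nat), (k + size t <= (2 * n).+2)%nat -> Sm k (Fel f a b t J).
  move=> t J k Hk; apply: Fel_Sm; [exact: Sm_le HF | move=> col I; exact: Sm_le (HG _ _ _)].
have SmH : forall t : tree, t \in gen n -> Sm 2 (Hf t).
  move=> t Ht; rewrite /Hf /Rdiv; apply: Sm_sumJ => J.
  apply: Sm_mult; last exact: Sm_const.
  apply: SmFel; have [_ _ ?] := Tinfo t Ht; lia.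
have EG : (fun y => \big[Rplus/0]_(t <- gen n) Hf t y) =
          (fun y => \big[Rplus/0]_(t <- gen n | t \in gen n) Hf t y).
  by apply: functional_extensionality => y; rewrite big_seq.
rewrite EG LD; first last.
- by move=> k j; apply: Sm_le (HB k j).
- by apply: Sm_sum => t Ht; exact: SmH.
have PA : Dv (fun y k => a k y) (fun y => \big[Rplus/0]_(t <- gen n | t \in gen n) Hf t y) x =
    \big[Rplus/0]_(t <- gen n | t \in gen n)
       \big[Rplus/0]_(p <- iota 0 (nnodes t)) Hf (t ++ [:: (p, Tau)]) x.
  rewrite Dv_sum; last by move=> t Ht; apply: Sm_le (SmH t Ht).
  apply: eq_bigr => t Ht; have [Hv Hs Hz] := Tinfo t Ht.
  transitivity (\big[Rplus/0]_(p <- iota 0 (nnodes t))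
     sumJ (snum t)./2 (fun J => Fel f a b (t ++ [:: (p, Tau)]) J x / 2 ^ (snum t)./2)); last first.
    by apply: eq_bigr => p _; rewrite /Hf snum_det.
  rewrite /Hf.
  etransitivity; first apply: (Dv_sumJ _ _ (G := fun J y => Fel f a b t J y / 2 ^ (snum t)./2)).
    move=> J; rewrite /Rdiv; apply: Sm_mult; [apply: SmFel; lia | exact: Sm_const].
  etransitivity; last exact: (sumJ_big _ _ (fun p J => Fel f a b (t ++ [:: (p, Tau)]) J x / 2 ^ (snum t)./2)).
  apply: sumJ_ext => J _.
  rewrite /Rdiv Dv_scal; last by apply: SmFel; lia.
  rewrite -big_distrl; congr (_ * _).
  have := (@Fel_D d m f a b t Tau J Hv _ _ x); apply.
    by apply: Sm_le HF; lia.
  by move=> col' I; apply: Sm_le (HG _ _ _); lia.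
have EB : forall (J : seq 'I_m) j r, size J = r ->
    (fun y k => b k j y) = (fun x0 I => gcol a b (rcons J j) (Sig r) I x0).
  move=> J j r HJ; apply: functional_extensionality => z; apply: functional_extensionality => I.
  by rewrite -HJ gcol_rcons.
have PB1 : forall j, Dv (fun y k => b k j y) (fun y => \big[Rplus/0]_(t <- gen n | t \in gen n) Hf t y) =
    fun y => \big[Rplus/0]_(t <- gen n | t \in gen n) sumJ (snum t)./2 (fun J =>
       \big[Rplus/0]_(p <- iota 0 (nnodes t))
          (Fel f a b (t ++ [:: (p, Sig (snum t)./2)]) (rcons J j) y / 2 ^ (snum t)./2)).
  move=> j; apply: functional_extensionality => y.
  rewrite Dv_sum; last by move=> t Ht; apply: Sm_le (SmH t Ht).
  apply: eq_bigr => t Ht; have [Hv Hs Hz] := Tinfo t Ht.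
  rewrite /Hf.
  etransitivity; first apply: (Dv_sumJ _ _ (G := fun J y => Fel f a b t J y / 2 ^ (snum t)./2)).
    move=> J; rewrite /Rdiv; apply: Sm_mult; [apply: SmFel; lia | exact: Sm_const].
  apply: sumJ_ext => J HJ.
  rewrite /Rdiv Dv_scal; last by apply: SmFel; lia.
  rewrite -big_distrl; congr (_ * _).
  rewrite -(Fel_Jext f a b [:: j] (J := J)); last by rewrite HJ.
  rewrite cats1 (EB J j _ HJ).
  have := (@Fel_D d m f a b t (Sig (snum t)./2) (rcons J j) Hv _ _ y); apply.
    by apply: Sm_le HF; lia.
  by move=> col' I; apply: Sm_le (HG _ _ _); lia.
have PB2 : forall j, Dv (fun y k => b k j y)
    (fun y => \big[Rplus/0]_(t <- gen n | t \in gen n) sumJ (snum t)./2 (fun J =>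
       \big[Rplus/0]_(p <- iota 0 (nnodes t))
          (Fel f a b (t ++ [:: (p, Sig (snum t)./2)]) (rcons J j) y / 2 ^ (snum t)./2))) x =
    \big[Rplus/0]_(t <- gen n | t \in gen n) sumJ (snum t)./2 (fun J =>
       \big[Rplus/0]_(p <- iota 0 (nnodes t)) \big[Rplus/0]_(q <- iota 0 (nnodes t).+1)
          (Fel f a b (t ++ [:: (p, Sig (snum t)./2); (q, Sig (snum t)./2)]) (rcons J j) x / 2 ^ (snum t)./2)).
  move=> j.
  have SmFp : forall t : tree, t \in gen n -> forall p J, Sm 1 (Fel f a b (t ++ [:: (p, Sig (snum t)./2)]) J).
    move=> t Ht p J; have [_ _ Hz] := Tinfo t Ht; apply: SmFel; rewrite size_cat /=; lia.
  rewrite Dv_sum; last first.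
    move=> t Ht; apply: Sm_sumJ => J; apply: Sm_sum => p _; rewrite /Rdiv; apply: Sm_mult;
      [exact: SmFp | exact: Sm_const].
  apply: eq_bigr => t Ht; have [Hv Hs Hz] := Tinfo t Ht.
  etransitivity; first apply: (Dv_sumJ _ _ (G := fun J y => \big[Rplus/0]_(p <- iota 0 (nnodes t))
          (Fel f a b (t ++ [:: (p, Sig (snum t)./2)]) (rcons J j) y / 2 ^ (snum t)./2))).
    move=> J; apply: Sm_sum => p _; rewrite /Rdiv; apply: Sm_mult; [exact: SmFp | exact: Sm_const].
  apply: sumJ_ext => J HJ.
  rewrite Dv_sum; last by move=> p _; rewrite /Rdiv; apply: Sm_mult; [exact: SmFp | exact: Sm_const].
  apply: eq_big_seq => p; rewrite mem_iota => /andP [_ Hp].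
  rewrite /Rdiv Dv_scal; last exact: SmFp.
  rewrite -big_distrl; congr (_ * _).
  rewrite (EB J j _ HJ).
  have Hvp : valid (t ++ [:: (p, Sig (snum t)./2)]) by rewrite cats1; apply: valid_rcons.
  etransitivity; first apply: (@Fel_D d m f a b _ (Sig (snum t)./2) (rcons J j) Hvp _ _ x).
  - by apply: Sm_le HF; rewrite size_cat /=; lia.
  - by move=> col' I; apply: Sm_le (HG _ _ _); rewrite size_cat /=; lia.
  rewrite size_cat /= addn1 /nnodes; by apply: eq_bigr => q _; rewrite -catA.
have PB : forall j, Dv (fun y k => b k j y) (Dv (fun y k => b k j y)
      (fun y => \big[Rplus/0]_(t <- gen n | t \in gen n) Hf t y)) x =
    \big[Rplus/0]_(t <- gen n | t \in gen n) sumJ (snum t)./2 (fun J =>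
       \big[Rplus/0]_(p <- iota 0 (nnodes t)) \big[Rplus/0]_(q <- iota 0 (nnodes t).+1)
          (Fel f a b (t ++ [:: (p, Sig (snum t)./2); (q, Sig (snum t)./2)]) (rcons J j) x / 2 ^ (snum t)./2)).
  by move=> j; rewrite PB1 PB2.
rewrite PA (eq_bigr _ (fun j _ => PB j)) sum_gen [RHS]big_seq big_split /=.
congr (_ + _).
rewrite exchange_big big_distrr; apply: eq_bigr => t Ht /=.
set r := (snum t)./2.
transitivity (sumJ r (fun J => / 2 * \big[Rplus/0]_(j < m) \big[Rplus/0]_(p <- iota 0 (nnodes t))
      \big[Rplus/0]_(q <- iota 0 (nnodes t).+1)
        (Fel f a b (t ++ [:: (p, Sig r); (q, Sig r)]) (rcons J j) x / 2 ^ r))).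
  rewrite sumJ_scal; congr (_ * _); symmetry.
  exact: (sumJ_big r _ (fun j J => \big[Rplus/0]_(p <- iota 0 (nnodes t))
      \big[Rplus/0]_(q <- iota 0 (nnodes t).+1)
        (Fel f a b (t ++ [:: (p, Sig r); (q, Sig r)]) (rcons J j) x / 2 ^ r))).
transitivity (sumJ r (fun J => \big[Rplus/0]_(p <- iota 0 (nnodes t))
      \big[Rplus/0]_(q <- iota 0 (nnodes t).+1) \big[Rplus/0]_(j < m)
        (Fel f a b (t ++ [:: (p, Sig r); (q, Sig r)]) (rcons J j) x / 2 ^ r.+1))); last first.
  rewrite -sumJ_big2; apply: eq_bigr => p _; apply: eq_bigr => q _.
  rewrite /Hf snum_sto.
  have -> : (snum t).+2./2 = r.+1 by [].
  by rewrite sumJ_rcons.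
apply: sumJ_ext => J _.
have -> : \big[Rplus/0]_(j < m) \big[Rplus/0]_(p <- iota 0 (nnodes t))
      \big[Rplus/0]_(q <- iota 0 (nnodes t).+1)
        (Fel f a b (t ++ [:: (p, Sig r); (q, Sig r)]) (rcons J j) x / 2 ^ r) =
   \big[Rplus/0]_(p <- iota 0 (nnodes t))
      \big[Rplus/0]_(q <- iota 0 (nnodes t).+1) \big[Rplus/0]_(j < m)
        (Fel f a b (t ++ [:: (p, Sig r); (q, Sig r)]) (rcons J j) x / 2 ^ r).
  by rewrite swap3_rot swap3_rot.
rewrite big_distrr; apply: eq_bigr => p _; rewrite big_distrr; apply: eq_bigr => q _.
rewrite big_distrr; apply: eq_bigr => j _.
change (2 ^ r.+1) with (2 * 2 ^ r); rewrite /Rdiv Rinv_mult.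
set F := Fel f a b _ _ x.
transitivity (/ 2 * (F * / 2 ^ r)); first by []. ring.
Qed.
End Main.

Lemma main_ind (d m : nat) (f : pt d -> R) (a : 'I_d -> pt d -> R) (b : 'I_d -> 'I_m -> pt d -> R) (N : nat)
  (HA : forall I, Sm (2 * N) (a I)) (HB : forall I j, Sm (2 * N) (b I j)) (HF : Sm (2 * N) f) :
  forall n, (n <= N)%nat -> iter n (L0 a b) f = fun x => \big[Rplus/0%R]_(t <- gen n) Hf f a b t x.
Proof.
elim=> [|n IH] Hn.
  apply: functional_extensionality => x.
  rewrite /= big_cons big_nil /Hf /Fel /= /Rdiv Rinv_1 Rmult_1_r Rplus_0_r //.
rewrite /= IH; last by lia.
apply: functional_extensionality => x; apply: step.
- by move=> I; apply: Sm_le (HA I); lia.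
- by move=> I j; apply: Sm_le (HB I j); lia.
- by apply: Sm_le HF; lia.
Qed.

Lemma In_mem (T : eqType) (x : T) (s : seq T) : List.In x s <-> x \in s.
Proof.
elim: s => [//|y s IH] /=; rewrite inE; split.
  by case=> [->|/IH ->]; rewrite ?eqxx ?orbT.
by case/orP => [/eqP ->|/IH H]; [left | right].
Qed.

Lemma NoDup_uniq (T : eqType) (s : seq T) : List.NoDup s -> uniq s.
Proof.
elim: s => [//|x s IH] /List.NoDup_cons_iff [H1 H2] /=.
rewrite IH // andbT; apply/negP => /In_mem; exact: H1.
Qed.

Unset Implicit Arguments.

Theorem mainTheorem5 (d m n : nat) (Hd : (0 < d)%N) (Hm : (0 < m)%N)
  (f : pt d -> R) (a : 'I_d -> pt d -> R) (b : 'I_d -> 'I_m -> pt d -> R)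
  (Hf : Ck (2 * n) f)
  (Ha : forall i : 'I_d, Ck (2 * n) (a i))
  (Hb : forall (k : 'I_d) (j : 'I_m), Ck (2 * n + 1) (b k j))
  (ts : seq tree)
  (Hts_nodup : List.NoDup ts)
  (Hts : forall t : tree, List.In t ts <-> (LTS t /\ rho t = n))
  (x0 : pt d) :
  iter n (L0 a b) f x0 =
  \big[Rplus/0%R]_(t <- ts)
     sumJ (snum t)./2 (fun J => (Fel f a b t J x0 / 2 ^ (snum t)./2)%R).
Proof.
have HA : forall I, Sm (2 * n) (a I) by move=> I; apply: Ck_Sm; exact: Ha.
have HB : forall I j, Sm (2 * n) (b I j).
  by move=> I j; apply: (Sm_le (k' := (2 * n + 1)%nat)); [lia | apply: Ck_Sm; exact: Hb].
have HF : Sm (2 * n) f by apply: Ck_Sm.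
rewrite (main_ind HA HB HF (leqnn n)).
have Hp : perm_eq (gen n) ts.
  apply: uniq_perm; [exact: gen_uniq | exact: NoDup_uniq | ].
  move=> t; apply/idP/idP.
    by move=> /gen_sound H; apply/In_mem; apply/Hts.
  by move=> /In_mem /Hts [Ht <-]; apply: gen_complete.
by rewrite (perm_big _ Hp).
Qed.
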